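(* Let $X\subseteq\mathcal A^{\mathbb Z}$ be a subshift generated by an everywhere growing directive sequence $\overleftarrow\sigma=(\sigma_n:\mathcal A_{n+1}^*\to\mathcal A_n^* )_{n\ge0}$ with $\mathcal A_0=\mathcal A$ and of finite alphabet rank. Assume that for every $n\ge0$ the incidence matrix $M(\sigma_n)$ is invertible over $\mathbb R$. Then any shift-invariant measure $\mu$ on $X$ is determined by the values $\mu([a])$, $a\in\mathcal A$; i.e. two invariant measures $\mu,\mu'$ on $X$ with $\mu([a])=\mu'([a])$ for all $a\in\mathcal A$ are equal.
   Context: Directive sequence: non-erasing monoid morphisms $\sigma_n:\mathcal A_{n+1}^*\to\mathcal A_n^*$ over finite alphabets, $\sigma_{[0,n)}=\sigma_0\circ\cdots\circ\sigma_{n-1}$; it generates the subshift of all $\mathbf x\in\mathcal A_0^{\mathbb Z}$ whose finite factors are factors of some $\sigma_{[0,n)}(a)$, $a\in\mathcal A_n$. Everywhere growing: $\min_{a\in\mathcal A_n}|\sigma_{[0,n)}(a)|\to\infty$. Finite alphabet rank: the cardinalities $\mathrm{card}(\mathcal A_n)$ are bounded. Incidence matrix $M(\sigma)=(|\sigma(a)|_b)_{b\in\mathcal B,a\in\mathcal A}$. $[a]=\{\mathbf x:x_1=a\}$. *)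

(* Defs.v *)
From HB Require Import structures.
From mathcomp Require Import all_boot all_order all_algebra.
From mathcomp Require Import all_classical all_reals all_analysis.
Set Implicit Arguments. Unset Strict Implicit. Unset Printing Implicit Defensive.
Import Order.TTheory GRing.Theory Num.Theory.
Local Open Scope classical_set_scope.
Local Open Scope ring_scope.

(* A directive sequence: alphabets [A n] (finite types) and morphisms
   sigma n : A (n+1)^* -> A n^*, given by their images of letters. *)

Definition subst_word (B C : Type) (s : C -> seq B) (w : seq C) : seq B :=
  flatten (map s w).

(* sigma_[0,n) = sigma_0 o ... o sigma_(n-1) : A n^* -> A 0^* *)
Fixpoint sigma0n (A : nat -> Type) (sigma : forall n, A n.+1 -> seq (A n))
  (n : nat) : seq (A n) -> seq (A 0%N) :=
  match n return seq (A n) -> seq (A 0%N) with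
  | 0 => fun w => w
  | m.+1 => fun w => @sigma0n A sigma m (subst_word (sigma m) w)
  end.
Arguments sigma0n {A} sigma n w.

Definition non_erasing (A : nat -> finType) (sigma : forall n, A n.+1 -> seq (A n)) :=
  forall n (a : A n.+1), sigma n a <> [::].

Definition everywhere_growing (A : nat -> finType) (sigma : forall n, A n.+1 -> seq (A n)) :=
  forall N : nat, exists n0 : nat, forall n, (n0 <= n)%N ->
    forall a : A n, (N <= size (sigma0n sigma n [:: a]))%N.

Definition finite_alphabet_rank (A : nat -> finType) :=
  exists K : nat, forall n, (#|A n| <= K)%N.

Definition incidence_matrix (R : nzRingType) (A : nat -> finType)
  (sigma : forall n, A n.+1 -> seq (A n)) (n : nat) : 'M[R]_(#|A n|, #|A n.+1|) :=
  \matrix_(i < #|A n|, j < #|A n.+1|)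
     (count_mem (enum_val i) (sigma n (enum_val j)))%:R.

Definition mx_invertible (R : nzRingType) m n (M : 'M[R]_(m, n)) :=
  exists N : 'M[R]_(n, m), M *m N = 1%:M /\ N *m M = 1%:M.

(* configurations A^Z; the parameter b only provides the point required
   by MathComp-Analysis' measurable-space structure *)
Definition config (B : finType) (b : B) : Type := int -> B.
HB.instance Definition _ (B : finType) (b : B) := Choice.on (config b).
HB.instance Definition _ (B : finType) (b : B) :=
  isPointed.Build (config b) (fun _ => b).

Definition factor_at (B : Type) (x : int -> B) (i : int) (k : nat) : seq B :=
  [seq x (i + j%:Z) | j <- iota 0 k].

Definition gen_subshift (A : nat -> finType) (sigma : forall n, A n.+1 -> seq (A n))
  (b : A 0%N) : set (config b) :=
  [set x | forall (i : int) (k : nat), exists n (a : A n),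
      infix (factor_at x i k) (sigma0n sigma n [:: a])].

(* cylinder sets {x | x_i = a}; they generate the Borel sigma-algebra of
   the product topology on A^Z *)
Definition cylinders (B : finType) (b : B) : set (set (config b)) :=
  [set C | exists (i : int) (a : B), C = [set x | x i = a]].

Definition shift_space (B : finType) (b : B) := g_sigma_algebraType (@cylinders B b).

Definition shift (B : finType) (b : B) (x : shift_space b) : shift_space b :=
  fun i => x (i + 1).

Definition letter_cyl (B : finType) (b : B) (a : B) : set (shift_space b) :=
  [set x | x 1 = a].

Definition invariant_measure_on (R : realType) (B : finType) (b : B)
  (X : set (shift_space b)) (mu : probability (shift_space b) R) :=
  (mu X = 1)%E /\
  forall E : set (shift_space b), measurable E ->
    mu (@shift B b @^-1` E) = mu E.

Arguments gen_subshift {A} sigma b.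
Arguments cylinders {B} b.
Arguments shift_space {B} b.
Arguments shift {B} b x.
Arguments letter_cyl {B} b a.
Arguments invariant_measure_on {R B b} X mu.

(* Main.v *)
Require Import Defs.
From HB Require Import structures.
From mathcomp Require Import all_boot all_order all_algebra.
From mathcomp Require Import all_classical all_reals all_analysis.
From mathcomp Require Import zify ring lra.
Local Open Scope classical_set_scope.
Local Open Scope ring_scope.
Set Implicit Arguments. Unset Strict Implicit. Unset Printing Implicit Defensive.
Import Order.TTheory GRing.Theory Num.Theory.

Section Words.
Variable B : eqType.
Implicit Types w v x y : seq B.

Definition occ w v i : bool := take (size w) (drop i v) == w.
Definition cnt w v : nat := (\sum_(0 <= i < size v) occ w v i)%N.

Lemma cnt_le w v : (cnt w v <= size v)%N.
Proof.
rewrite /cnt; apply: (@leq_trans (\sum_(0 <= i < size v) 1)%N).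
  by apply: leq_sum => i _; apply: leq_b1.
by rewrite sum_nat_const_nat subn0 muln1.
Qed.

Lemma sum_nat_le1 (a b : nat) (F : nat -> bool) :
  (\sum_(a <= i < b) F i <= b - a)%N.
Proof.
apply: (@leq_trans (\sum_(a <= i < b) 1)%N).
  by apply: leq_sum => i _; apply: leq_b1.
by rewrite sum_nat_const_nat muln1.
Qed.

Lemma cnt_cat_split w x y :
  cnt w (x ++ y) = (\sum_(0 <= i < size x) occ w (x ++ y) i + cnt w y)%N.
Proof.
rewrite /cnt size_cat (@big_cat_nat _ _ _ (size x)) //= ?leq_addr //.
congr (_ + _)%N.
rewrite -{1}(add0n (size x)) big_addn.
rewrite addKn.
apply: eq_bigr => i _; rewrite /occ drop_cat.
by rewrite ltnNge leq_addl /= addnK.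
Qed.

Lemma cnt_cat_ge w x y : (cnt w x + cnt w y <= cnt w (x ++ y))%N.
Proof.
rewrite cnt_cat_split leq_add2r /cnt.
rewrite big_seq [X in (_ <= X)%N]big_seq.
apply: leq_sum => i; rewrite mem_index_iota => /andP [_ hi].
rewrite /occ drop_cat hi.
case E: (take (size w) (drop i x) == w) => //.
have hs : (size w <= size (drop i x))%N.
  by move/eqP: E => E; rewrite -{1}E size_take_min; apply: geq_minr.
by rewrite takel_cat // E.
Qed.

Lemma cnt_cat_le w x y : (cnt w (x ++ y) <= cnt w x + cnt w y + size w)%N.
Proof.
rewrite cnt_cat_split addnAC leq_add2r.
have H : (\sum_(0 <= i < size x) occ w (x ++ y) i <=
          \sum_(0 <= i < size x) (occ w x i + (size x < i + size w))%N)%N.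
  rewrite big_seq [X in (_ <= X)%N]big_seq.
  apply: leq_sum => i; rewrite mem_index_iota => /andP [_ hi].
  case: (ltnP (size x) (i + size w)) => h; first by rewrite addn1; apply: leq_trans (leq_b1 _) _.
  rewrite addn0 /occ drop_cat hi takel_cat //.
  by rewrite size_drop leq_subRL // ?addnC // ltnW.
apply: leq_trans H _.
rewrite big_split /= leq_add2l.
case: (leqP (size w) (size x)) => hw.
  rewrite (@big_cat_nat _ _ _ (size x - size w)) //= ?leq_subr //.
  rewrite big_seq big1 ?add0n; last first.
    move=> i; rewrite mem_index_iota => /andP [_ hi].
    apply/eqP; rewrite eqb0 -leqNgt.
    lia.
  by apply: leq_trans (sum_nat_le1 _ _ _) _; rewrite subKn.
apply: leq_trans (sum_nat_le1 _ _ _) _; rewrite subn0 ltnW //.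
Qed.

End Words.

Section Sigma.
Variable A : nat -> finType.
Variable sigma : forall n, A n.+1 -> seq (A n).

Definition tau n (b : A n) : seq (A 0%N) := sigma0n sigma n [:: b].

Lemma sigma0n_nil n : sigma0n sigma n [::] = [::].
Proof. by elim: n => //= n IH. Qed.

Lemma sigma0n_cat n (u u' : seq (A n)) :
  sigma0n sigma n (u ++ u') = sigma0n sigma n u ++ sigma0n sigma n u'.
Proof.
elim: n u u' => //= n IH u u'.
by rewrite /subst_word map_cat flatten_cat IH.
Qed.

Lemma sigma0n_flat n (u : seq (A n)) :
  sigma0n sigma n u = flatten (map (@tau n) u).
Proof.
elim: u => [|b u IH] /=; first exact: sigma0n_nil.
by rewrite -cat1s sigma0n_cat IH.
Qed.

Lemma tauS n (b : A n.+1) : tau b = sigma0n sigma n (sigma b).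
Proof. by rewrite /tau /= /subst_word /= cats0. Qed.

Lemma infix_sigma0n n (u u' : seq (A n)) :
  infix u u' -> infix (sigma0n sigma n u) (sigma0n sigma n u').
Proof.
case/infixP => p [s ->].
by rewrite !sigma0n_cat; apply/infixP; exists (sigma0n sigma n p), (sigma0n sigma n s); rewrite catA.
Qed.

Lemma lift_up n (surj : forall j (a : A j), exists b : A j.+1, a \in sigma b) :
  forall k (a : A n), exists b : A (k + n), infix (tau a) (tau b).
Proof.
elim=> [|k IH] a; first by exists a; apply: infix_refl.
have [b hb] := IH a.
have [b' hb'] := surj _ b.
exists b'.
apply: infix_trans hb _.
rewrite tauS /tau.
apply: infix_sigma0n.
by rewrite infix1s.
Qed.

Lemma lift_down n : forall k (u : seq (A (k + n))), exists u' : seq (A n),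
  sigma0n sigma (k + n) u = sigma0n sigma n u'.
Proof.
elim=> [|k IH] u; first by exists u.
have [u' hu'] := IH (subst_word (@sigma (k + n)) u).
by exists u'.
Qed.

Lemma lift_level n (surj : forall j (a : A j), exists b : A j.+1, a \in sigma b)
  m (a : A m) : exists u : seq (A n), infix (tau a) (sigma0n sigma n u).
Proof.
case: (leqP n m) => h.
  have := @lift_down n (m - n)%N; rewrite subnK // => /(_ [:: a]) [u hu].
  by exists u; rewrite -hu; apply: infix_refl.
have := @lift_up m surj (n - m)%N; rewrite subnK; last exact: ltnW.
move=> /(_ a) [b hb].
by exists [:: b]; rewrite sigma0n_flat /= cats0.
Qed.

End Sigma.

Ltac li := repeat match goal with H : (_ = false) |- _ => move/negbT: H => H end; lia.

Section Infix.
Variable B : eqType.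
Implicit Types v x y p s : seq B.

Lemma infix_cat_cases v x y : infix v (x ++ y) ->
  [\/ infix v x, infix v y |
      exists v1 v2, [/\ v = v1 ++ v2, (exists p, x = p ++ v1) & (exists s, y = v2 ++ s)]].
Proof.
case/infixP => p [s E].
have Hx : x = take (size x) (p ++ v ++ s) by rewrite -E take_size_cat.
have Hy : y = drop (size x) (p ++ v ++ s) by rewrite -E drop_size_cat.
case: (leqP (size p + size v) (size x)) => h1.
  apply: Or31; rewrite {1}Hx take_cat.
  case: ifP => h2; first li.
  rewrite take_cat; case: ifP => h3; first li.
  by apply/infixP; exists p, (take (size x - size p - size v) s); rewrite catA.
case: (leqP (size x) (size p)) => h2.
  apply: Or32; rewrite {1}Hy drop_cat.
  case: ifP => h3.
    by apply/infixP; exists (drop (size x) p), s.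
  have E2 : size x = size p by li.
  rewrite E2.
  by rewrite subnn drop0; apply/infixP; exists [::], s.
apply: Or33; exists (take (size x - size p) v), (drop (size x - size p) v).
split; first by rewrite cat_take_drop.
  exists p; rewrite {1}Hx take_cat; case: ifP => h3; first li.
  by rewrite take_cat; case: ifP => h4 //; li.
exists s; rewrite {1}Hy drop_cat; case: ifP => h3; first li.
by rewrite drop_cat; case: ifP => h4 //; li.
Qed.

Lemma prefix_cat_cases v x y s : x ++ y = v ++ s ->
  (size v <= size x /\ exists s', x = v ++ s')%N \/
  (exists v'', v = x ++ v'' /\ y = v'' ++ s).
Proof.
move=> E.
case: (leqP (size v) (size x)) => h.
  left; split => //; exists (drop (size v) x).
  have : take (size v) (x ++ y) = v by rewrite E take_size_cat.
  by rewrite takel_cat // => Ev; rewrite -{1}(cat_take_drop (size v) x) Ev.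
right; exists (drop (size x) v); split.
  have : take (size x) (v ++ s) = x by rewrite -E take_size_cat.
  rewrite takel_cat; last exact: ltnW.
  by move=> Ev; rewrite -{1}(cat_take_drop (size x) v) Ev.
have : drop (size x) (x ++ y) = drop (size x) (v ++ s) by rewrite E.
by rewrite drop_size_cat // drop_cat; case: ifP => //; li.
Qed.

End Infix.

Section DBound.
Variables (R : realType) (B : finType) (w : seq B) (F : B -> R).

Definition Dv (v : seq B) : R :=
  (cnt w v)%:R - \sum_(c : B) F c * (count_mem c v)%:R.

Definition CF : R := \sum_(c : B) `|F c|.

Lemma CF_ge0 : 0 <= CF.
Proof. by apply: sumr_ge0 => c _; apply: normr_ge0. Qed.

Lemma norm_tri (x y : R) : `|x| <= `|x - y| + `|y|.
Proof. by rewrite -{1}(subrK y x) ler_normD. Qed.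

Lemma Dv_nil : Dv [::] = 0.
Proof.
rewrite /Dv /cnt /= big_geq //.
have -> : \sum_(c : B) F c * (count_mem c [::])%:R = 0.
  by apply: big1 => c _; rewrite mulr0.
by rewrite subr0.
Qed.

Lemma Dv_cat x y : `|Dv (x ++ y) - (Dv x + Dv y)| <= (size w)%:R.
Proof.
have -> : Dv (x ++ y) - (Dv x + Dv y) =
          (cnt w (x ++ y))%:R - ((cnt w x)%:R + (cnt w y)%:R).
  rewrite /Dv.
  have -> : \sum_(c : B) F c * (count_mem c (x ++ y))%:R =
     \sum_(c : B) F c * (count_mem c x)%:R + \sum_(c : B) F c * (count_mem c y)%:R.
    by rewrite -big_split /=; apply: eq_bigr => c _; rewrite count_cat natrD mulrDr.
  set a := \sum_(c : B) _; set b := \sum_(c : B) _; lra.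
have h1 := cnt_cat_ge w x y.
have h2 := cnt_cat_le w x y.
rewrite -natrD -(subnK h1) natrD addrK.
rewrite ger0_norm ?ler0n // ler_nat leq_subLR.
exact: h2.
Qed.

Lemma Dv_small v : `|Dv v| <= (1 + CF) * (size v)%:R.
Proof.
rewrite /Dv mulrDl mul1r.
apply: le_trans (ler_normB _ _) _.
apply: lerD.
  by rewrite ger0_norm ?ler0n // ler_nat cnt_le.
apply: le_trans (ler_norm_sum _ _ _) _.
rewrite /CF mulr_suml; apply: ler_sum => c _.
rewrite normrM normr_nat.
apply: ler_wpM2l; first exact: normr_ge0.
by rewrite ler_nat count_size.
Qed.

Variables (T : Type) (tau : T -> seq B) (beta Bm : nat).
Hypothesis hD : forall b, Dv (tau b) = 0.
Hypothesis hbeta : forall b, (beta <= size (tau b))%N.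
Hypothesis hBm : forall b, (size (tau b) <= Bm)%N.

Lemma Dv_le_Bm v : (size v <= Bm)%N -> `|Dv v| <= (1 + CF) * Bm%:R.
Proof.
move=> h; apply: le_trans (Dv_small v) _.
apply: ler_wpM2l; last by rewrite ler_nat.
by have := CF_ge0; lra.
Qed.

Lemma Dv_prefix u v s : flatten (map tau u) = v ++ s ->
  exists j : nat, (j * beta <= size v)%N /\
    `|Dv v| <= (1 + CF) * Bm%:R + (size w)%:R * j%:R.
Proof.
elim: u v s => [|b u IH] v s /= E.
  exists 0%N; split => //.
  case: v E => // _; rewrite Dv_nil normr0 mulr0 addr0.
  by apply: mulr_ge0; [have := CF_ge0; lra | apply: ler0n].
case: (prefix_cat_cases E) => [[h1 _]|[v'' [Ev Eu]]].
  exists 0%N; split => //.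
  rewrite mulr0 addr0; apply: Dv_le_Bm.
  by apply: leq_trans h1 (hBm b).
have [j [hj1 hj2]] := IH v'' s Eu.
exists j.+1; split.
  rewrite Ev size_cat mulSn; apply: leq_add => //.
have := Dv_cat (tau b) v''.
rewrite hD add0r -Ev => h.
have := norm_tri (Dv v) (Dv v'').
rewrite -natr1 mulrDr mulr1.
lra.
Qed.

Lemma Dv_infix u v : infix v (flatten (map tau u)) ->
  exists j : nat, (j * beta <= size v)%N /\
    `|Dv v| <= 2 * ((1 + CF) * Bm%:R) + (size w)%:R * j.+1%:R.
Proof.
have hC : 0 <= (1 + CF) * Bm%:R.
  by apply: mulr_ge0; [have := CF_ge0; lra | apply: ler0n].
have hw : 0 <= (size w)%:R :> R by apply: ler0n.
elim: u v => [|b u IH] v /=.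
  move=> hv; have -> : v = [::] by move: hv; case: v.
  exists 0%N; split => //.
  rewrite Dv_nil normr0.
  apply: addr_ge0; [lra | apply: mulr_ge0 => //; apply: ler0n].
case/infix_cat_cases => [h|h|[v1 [v2 [Ev [p Ep] [s Es]]]]].
- exists 0%N; split => //.
  have := Dv_le_Bm (leq_trans (size_infix h) (hBm b)).
  lra.
- have [j [hj1 hj2]] := IH v h.
  exists j; split => //; lra.
- have [j [hj1 hj2]] := Dv_prefix Es.
  exists j; split.
    by rewrite Ev size_cat; apply: leq_trans hj1 (leq_addl _ _).
  have h1 : (size v1 <= Bm)%N.
    apply: leq_trans (hBm b); rewrite Ep size_cat; apply: leq_addl.
  have := Dv_le_Bm h1.
  have := Dv_cat v1 v2.
  have := norm_tri (Dv (v1 ++ v2)) (Dv v1 + Dv v2).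
  have := ler_normD (Dv v1) (Dv v2).
  rewrite -Ev.
  have -> : (j.+1)%:R = j%:R + 1 :> R by rewrite natr1.
  rewrite mulrDr mulr1.
  lra.
Qed.

End DBound.

Lemma sum_seq_count (T : finType) (s : seq T) (f : T -> nat) :
  (\sum_(x <- s) f x = \sum_(x : T) count_mem x s * f x)%N.
Proof.
elim: s => [|y s IH].
  by rewrite big_nil big1 // => x _.
rewrite big_cons IH.
have -> : (\sum_(x : T) count_mem x (y :: s) * f x =
           \sum_(x : T) (y == x) * f x + \sum_(x : T) count_mem x s * f x)%N.
  by rewrite -big_split /=; apply: eq_bigr => x _; rewrite mulnDl.
congr (_ + _)%N.
rewrite (bigD1 y) //= eqxx mul1n big1 ?addn0 // => x /negbTE hx.
by rewrite eq_sym hx.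
Qed.

Lemma sum_enum_val (R : nmodType) (T : finType) (f : T -> R) :
  \sum_(x : T) f x = \sum_(i < #|T|) f (enum_val i).
Proof.
rewrite (reindex (@enum_val T predT)) //=.
apply: onW_bij; exact: (@enum_val_bij T).
Qed.

Section Matrices.
Variables (R : realType) (A : nat -> finType).
Variable sigma : forall n, A n.+1 -> seq (A n).

Fixpoint Mprod n : 'M[R]_(#|A 0%N|, #|A n|) :=
  match n return 'M[R]_(#|A 0%N|, #|A n|) with
  | 0 => 1%:M
  | m.+1 => Mprod m *m incidence_matrix R sigma m
  end.

Lemma count_tauS n (a : A n.+1) (c : A 0%N) :
  count_mem c (tau sigma a) =
  (\sum_(b : A n) count_mem b (sigma a) * count_mem c (tau sigma b))%N.
Proof.
rewrite tauS sigma0n_flat count_flatten sumnE.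
by rewrite big_map big_map (sum_seq_count (sigma a)).
Qed.

Lemma Mprod_E n i j :
  Mprod n i j = (count_mem (enum_val i) (tau sigma (enum_val j)))%:R.
Proof.
elim: n i j => [|n IH] i j /=.
  rewrite /tau /= mxE addn0.
  case: (eqVneq i j) => [->|hij]; first by rewrite eqxx.
  have : enum_val j != enum_val i.
    by apply: contra_neq hij => /enum_val_inj ->.
  by move/negbTE => ->.
rewrite mxE count_tauS natr_sum (sum_enum_val (fun b : A n => _)).
apply: eq_bigr => k _.
by rewrite IH /incidence_matrix mxE natrM mulrC.
Qed.

Hypothesis hinv : forall n : nat, mx_invertible (incidence_matrix R sigma n).

Lemma Mprod_linv n : exists G : 'M[R]_(#|A n|, #|A 0%N|), G *m Mprod n = 1%:M.
Proof.
elim: n => [|n [G hG]]; first by exists 1%:M; rewrite mul1mx.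
have [N [_ hN]] := hinv n.
exists (N *m G) => /=.
by rewrite mulmxA -(mulmxA N) hG mulmx1 hN.
Qed.

Lemma exists_F (w : seq (A 0%N)) n : exists F : A 0%N -> R,
  forall a : A n, Dv w F (tau sigma a) = 0.
Proof.
have [G hG] := Mprod_linv n.
pose y (j : 'I_#|A n|) : R := (cnt w (tau sigma (enum_val j)))%:R.
exists (fun c => \sum_(j < #|A n|) y j * G j (enum_rank c)).
move=> a; rewrite /Dv; apply/eqP; rewrite subr_eq0; apply/eqP.
rewrite (sum_enum_val (fun c : A 0%N => _)) /=.
have -> : \sum_(i < #|A 0%N|)
    (\sum_(j < #|A n|) y j * G j (enum_rank (enum_val i))) *
      (count_mem (enum_val i) (tau sigma a))%:R =
    \sum_(j < #|A n|) y j * (G *m Mprod n) j (enum_rank a).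
  under eq_bigr => i _ do rewrite mulr_suml.
  rewrite exchange_big /=; apply: eq_bigr => j _.
  rewrite mxE mulr_sumr; apply: eq_bigr => i _.
  by rewrite enum_valK Mprod_E enum_rankK mulrA.
rewrite hG (bigD1 (enum_rank a)) //= mxE eqxx mulr1 big1 ?addr0.
  by rewrite /y enum_rankK.
by move=> j /negbTE hj; rewrite mxE hj mulr0.
Qed.

End Matrices.

Section Meas.
Variables (R : realType) (B : finType) (b : B).
Variable mu : probability (shift_space b) R.
Local Notation T := (shift_space b).

Definition mfin (E : set T) : R := fine (mu E).

Lemma mu_fin E : measurable E -> mu E \is a fin_num.
Proof.
move=> mE; rewrite ge0_fin_numE ?measure_ge0 //.
by apply: le_lt_trans (probability_le1 mu mE) _; rewrite ltey.
Qed.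

Lemma muE E : measurable E -> mu E = (mfin E)%:E.
Proof. by move=> mE; rewrite /mfin fineK // mu_fin. Qed.

Lemma mr_ge0 E : measurable E -> 0 <= mfin E.
Proof. by move=> mE; rewrite /mfin fine_ge0 // measure_ge0. Qed.

Lemma mr_le1 E : measurable E -> mfin E <= 1.
Proof. by move=> mE; rewrite -lee_fin -muE // probability_le1. Qed.

Lemma mrT : mfin setT = 1.
Proof. by rewrite /mfin probability_setT. Qed.

Lemma mr0 : mfin set0 = 0.
Proof. by rewrite /mfin measure0. Qed.

Lemma mrU E F : measurable E -> measurable F -> E `&` F = set0 ->
  mfin (E `|` F) = mfin E + mfin F.
Proof.
move=> mE mF h; rewrite /mfin measureU // fineD //; exact: mu_fin.
Qed.

End Meas.

Section Cyl.
Variables (B : finType) (b : B).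
Local Notation T := (shift_space b).

Definition cylw (i : int) (t : seq B) : set T :=
  [set x | factor_at x i (size t) = t].

Definition wwin (i : int) (k : nat) (P : seq B -> Prop) : set T :=
  [set x | P (factor_at x i k)].

Lemma size_factor_at (x : T) i k : size (factor_at x i k) = k.
Proof. by rewrite /factor_at size_map size_iota. Qed.

Lemma factor_atS (x : int -> B) i k :
  factor_at x i k.+1 = x i :: factor_at x (i + 1) k.
Proof.
rewrite /factor_at /= addr0; congr (_ :: _).
rewrite -[1%N]addn0 iotaDl -map_comp; apply: eq_map => j /=.
by rewrite PoszD addrA.
Qed.

Lemma letter_measurable i a : measurable [set x : T | x i = a].
Proof. by apply: sub_sigma_algebra; exists i, a. Qed.

Lemma cyl_measurable i t : measurable (cylw i t).
Proof.
elim: t i => [|a t IH] i.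
  have -> : cylw i [::] = setT by apply/seteqP; split => x //=.
  exact: measurableT.
have -> : cylw i (a :: t) = [set x : T | x i = a] `&` cylw (i + 1) t.
  apply/seteqP; split => x /=; rewrite /cylw /= factor_atS.
    by case=> -> ->.
  by case=> -> ->.
by apply: measurableI => //; apply: letter_measurable.
Qed.

Lemma wset_measurable i k P : measurable (wwin i k P).
Proof.
have -> : wwin i k P =
   \bigcup_(t in [set t : k.-tuple B | P t]) cylw i t.
  apply/seteqP; split => x /=.
    move=> hx.
    exists (Tuple (introT eqP (size_factor_at x i k))) => //=.
    by rewrite /cylw /= size_factor_at.
  case=> t /= Pt hx.
  rewrite /wwin /=.
  have -> : factor_at x i k = t by move: hx; rewrite /cylw /= size_tuple.
  exact: Pt.
apply: fin_bigcup_measurable; first exact: finite_finset.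
by move=> t _; apply: cyl_measurable.
Qed.

Lemma factor_at_shift (x : T) (i : int) k :
  factor_at (Defs.shift b x) i k = factor_at x (i + 1) k.
Proof.
by rewrite /factor_at /Defs.shift; apply: eq_map => j /=; rewrite addrAC.
Qed.

Lemma cyl_shift (i : int) (t : seq B) :
  (@Defs.shift B b) @^-1` (cylw i t) = cylw (i + 1) t.
Proof.
by apply/seteqP; split => x; rewrite /preimage /cylw /= factor_at_shift.
Qed.

Lemma in_bigsetU (I : eqType) (s : seq I) (F : I -> set T) x :
  (\big[setU/set0]_(t <- s) F t) x <-> exists2 t, t \in s & F t x.
Proof.
elim: s => [|t s IH]; first by rewrite big_nil; split => // -[].
rewrite big_cons; split.
  case=> [h|/IH [t' h1 h2]]; first by exists t => //; rewrite mem_head.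
  by exists t' => //; rewrite in_cons h1 orbT.
case=> t'; rewrite in_cons => /orP [/eqP ->|h1] h2; first by left.
by right; apply/IH; exists t'.
Qed.

End Cyl.

Section Count.
Variables (R : realType) (B : finType) (b : B).
Variable mu : probability (shift_space b) R.
Local Notation T := (shift_space b).
Hypothesis hinv : forall E : set T, measurable E ->
  mu (@Defs.shift B b @^-1` E) = mu E.

Local Notation mr := (mfin mu).
Local Notation cyl := (@cylw B b).

Lemma mr_cyl_step (i : int) t : mr (cyl (i + 1) t) = mr (cyl i t).
Proof. by rewrite /mfin -cyl_shift hinv //; apply: cyl_measurable. Qed.

Lemma mr_cyl_nat (n : nat) (j : int) t : mr (cyl (j + n%:Z) t) = mr (cyl j t).
Proof.
elim: n => [|n IH]; first by rewrite addr0.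
by rewrite -addn1 PoszD addrA mr_cyl_step IH.
Qed.

Lemma mr_cyl (i : int) t : mr (cyl i t) = mr (cyl 1 t).
Proof.
case: (lerP 1 i) => h.
  have -> : i = 1 + (`|i - 1|%N)%:Z.
    by rewrite abszE ger0_norm ?subr_ge0 // addrCA subrr addr0.
  exact: mr_cyl_nat.
have -> : (1 : int) = i + (`|1 - i|%N)%:Z.
  by rewrite abszE ger0_norm ?subr_ge0 ?ltW // addrCA subrr addr0.
by rewrite mr_cyl_nat.
Qed.

Lemma mr_part_seq E j L (s : seq (L.-tuple B)) : measurable E -> uniq s ->
  mr (E `&` \big[setU/set0]_(t <- s) cyl j t) =
  \sum_(t <- s) mr (E `&` cyl j t).
Proof.
move=> mE; elim: s => [|t s IH] /=.
  by rewrite !big_nil setI0 mr0.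
case/andP => ts us.
rewrite !big_cons setIUr mrU //.
- by rewrite IH.
- by apply: measurableI => //; apply: cyl_measurable.
- apply: measurableI => //; apply: bigsetU_measurable => t' _.
  exact: cyl_measurable.
apply/seteqP; split => x //= [[_ h1] [_ /in_bigsetU [t' h2 h3]]].
move: h1 h3; rewrite /cylw /= !size_tuple => h1 h3.
have : t = t' by apply: val_inj; rewrite /= -h1 -h3.
move=> et; move: ts; rewrite et.
by rewrite h2.
Qed.

End Count.

Lemma take_drop_factor (B : Type) (x : int -> B) (j : int) L i k :
  take k (drop i (factor_at x j L)) = factor_at x (j + i%:Z) (minn k (L - i)).
Proof.
rewrite /factor_at -map_drop -map_take drop_iota take_iota add0n.
rewrite -{1}(addn0 i) iotaDl -map_comp; apply: eq_map => l /=.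
by rewrite PoszD addrA.
Qed.

Lemma cnt_letter (B : eqType) (c : B) (t : seq B) : cnt [:: c] t = count_mem c t.
Proof.
elim: t => [|a t IH]; first by rewrite /cnt big_geq.
rewrite /cnt /= big_nat_recl //= -/(cnt [:: c] t) IH.
by rewrite /occ /= take0 eqseq_cons andbT.
Qed.

Section Count2.
Variables (R : realType) (B : finType) (b : B).
Variable mu : probability (shift_space b) R.
Local Notation T := (shift_space b).
Hypothesis hinv : forall E : set T, measurable E ->
  mu (@Defs.shift B b @^-1` E) = mu E.
Local Notation mr := (mfin mu).
Local Notation cyl := (@cylw B b).

Lemma bigU_all j L :
  \big[setU/set0]_(t <- index_enum (L.-tuple B)) cyl j t = setT.
Proof.
apply/seteqP; split => x // _; apply/in_bigsetU.
exists (Tuple (introT eqP (size_factor_at x j L))); first exact: mem_index_enum.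
by rewrite /cylw /= size_factor_at.
Qed.

Lemma mr_part E j L : measurable E ->
  mr E = \sum_(t : L.-tuple B) mr (E `&` cyl j t).
Proof.
move=> mE; rewrite -mr_part_seq ?index_enum_uniq // bigU_all setIT //.
Qed.

Lemma occ_over w L i (t : L.-tuple B) : (i < L)%N -> (L < i + size w)%N -> occ w t i = false.
Proof.
move=> hi h; apply/negbTE/eqP => E.
have : size (take (size w) (drop i t)) = size w by rewrite E.
rewrite size_take_min size_drop size_tuple => h2.
have : (minn (size w) (L - i) < size w)%N.
  rewrite gtn_min; apply/orP; right; lia.
by rewrite h2 ltnn.
Qed.

Lemma part_occ w L i : (i + size w <= L)%N ->
  \sum_(t : L.-tuple B) mr (cyl 1 t) * (occ w t i)%:R = mr (cyl 1 w).
Proof.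
move=> h.
rewrite -(mr_cyl hinv (1 + i%:Z) w) (@mr_part (cyl (1 + i%:Z) w) 1 L); last exact: cyl_measurable.
apply: eq_bigr => t _.
have key : forall x, cyl 1 t x -> (occ w t i = (factor_at x (1 + i%:Z) (size w) == w)).
  move=> x; rewrite /cylw /= size_tuple => hx.
  rewrite /occ -hx take_drop_factor.
  by have -> : minn (size w) (L - i) = size w by apply/minn_idPl; lia.
case E: (occ w t i); rewrite ?mulr1 ?mulr0.
  congr mfin; apply/seteqP; split => x /=; last by case.
  move=> hx; split => //; move: (key x hx); rewrite E /cylw /= => /esym/eqP.
  done.
rewrite -(mr0 mu); congr mfin; apply/seteqP; split => x //= [h1 h2].
by move: (key x h2); rewrite E h1 eqxx.
Qed.

Lemma count_ident w L : (0 < size w)%N -> (size w <= L)%N ->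
  \sum_(t : L.-tuple B) mr (cyl 1 t) * (cnt w t)%:R =
  (L - size w).+1%:R * mr (cyl 1 w).
Proof.
move=> w0 wL.
have -> : \sum_(t : L.-tuple B) mr (cyl 1 t) * (cnt w t)%:R =
   \sum_(0 <= i < L) \sum_(t : L.-tuple B) mr (cyl 1 t) * (occ w t i)%:R.
  rewrite exchange_big /=; apply: eq_bigr => t _.
  by rewrite /cnt size_tuple natr_sum mulr_sumr.
have hL : ((L - size w).+1 <= L)%N by lia.
rewrite (big_cat_nat (leq0n (L - size w).+1) hL) /=.
rewrite [X in _ + X](_ : _ = 0) ?addr0; last first.
  rewrite big_nat; apply: big1 => i /andP [h1 h2]; apply: big1 => t _.
  rewrite occ_over /= ?mulr0 //; move: wL h1 h2; set n := size w; lia.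
rewrite big_nat (eq_bigr (fun _ => mr (cyl 1 w))); last first.
  move=> i /andP [h1 h2]; apply: part_occ; move: wL h2; set n := size w; lia.
by rewrite -big_nat sumr_const_nat subn0 mulr_natl.
Qed.

End Count2.

Lemma exists_nat_gt (R : realType) (x : R) : exists N : nat, x < N%:R.
Proof.
exists (Num.bound `|x|).
apply: le_lt_trans (ler_norm x) _.
exact: Num.Theory.archi_boundP.
Qed.

Lemma real_zero (R : realType) (d s2 : R) (s : nat) : 0 <= d -> 0 <= s2 ->
  (forall N : nat, (0 < N)%N -> exists K : R, forall L : nat, (s <= L)%N ->
     d * (L - s).+1%:R <= K + s2 * L%:R / N%:R) -> d = 0.
Proof.
move=> d0 s0 H; apply/eqP; rewrite eq_le d0 andbT leNgt; apply/negP => dpos.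
have [N hN] := exists_nat_gt (2 * s2 / d).
have hN0 : 0 < N%:R :> R.
  apply: le_lt_trans hN; apply: divr_ge0; [lra | exact: ltW].
have N0 : (0 < N)%N by rewrite -(ltr_nat R).
have [K HK] := H N N0.
have [M hM] := exists_nat_gt (2 * `|K| / d + s%:R).
have := HK (s + M)%N (leq_addr _ _).
rewrite addKn natrD.
have e1 : s2 / N%:R <= d / 2.
  rewrite ler_pdivrMr // mulrAC ler_pdivlMr; last lra.
  have : 2 * s2 / d * d < N%:R * d by rewrite ltr_pM2r.
  by rewrite mulfVK ?gt_eqF // => h; rewrite (mulrC s2) (mulrC d); lra.
have e2 : s2 * (s%:R + M%:R) / N%:R <= d / 2 * (s%:R + M%:R).
  rewrite mulrAC; apply: ler_wpM2r e1.
  by apply: addr_ge0; apply: ler0n.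
have e3 : 2 * `|K| / d * d = 2 * `|K|.
  by rewrite mulfVK ?gt_eqF.
have e4 : (2 * `|K| / d + s%:R) * d < M%:R * d by rewrite ltr_pM2r.
have eK : K <= `|K| := ler_norm K.
rewrite -natr1 => h.
have : d * (M%:R + 1) <= `|K| + d / 2 * (s%:R + M%:R) by lra.
move: e4; rewrite mulrDl e3.
have : 0 <= s%:R :> R by apply: ler0n.
have : 0 <= M%:R :> R by apply: ler0n.
nra.
Qed.

Section Main.
Variables (R : realType) (A : nat -> finType).
Variable sigma : forall n, A n.+1 -> seq (A n).
Variable b : A 0%N.
Local Notation B := (A 0%N).
Local Notation T := (shift_space b).
Local Notation X := (gen_subshift sigma b : set T).
Local Notation wset := (@wwin B b).
Local Notation cyl := (@cylw B b).

Definition Lang (v : seq B) : Prop :=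
  exists n (a : A n), infix v (sigma0n sigma n [:: a]).

Lemma X_measurable : measurable X.
Proof.
pose dec (p : nat) : int * nat := odflt (0, 0%N) (unpickle p).
have -> : X = \bigcap_(p in setT) wset (dec p).1 (dec p).2 Lang.
  apply/seteqP; split => x /=.
    by move=> hx p _; apply: hx.
  move=> hx i k; have := hx (pickle (i, k)) I.
  by rewrite /dec pickleK /=.
by apply: bigcap_measurableType => p _; apply: wset_measurable.
Qed.

Lemma surj_of_inv : (forall n, mx_invertible (incidence_matrix R sigma n)) ->
  forall j (a : A j), exists c : A j.+1, a \in sigma c.
Proof.
move=> hM j a.
case: (pselect (exists c : A j.+1, a \in sigma c)) => // hn.
exfalso.
have [N [hMN _]] := hM j.
move/matrixP: hMN => /(_ (enum_rank a) (enum_rank a)).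
rewrite !mxE eqxx /= big1 ?(@oner_eq0 R) //.
  by move=> /esym/eqP; rewrite oner_eq0.
move=> k _; rewrite /incidence_matrix mxE enum_rankK.
have : a \notin sigma (enum_val k).
  by apply/negP => h; apply: hn; exists (enum_val k).
by move/count_memPn => ->; rewrite mul0r.
Qed.

Section PerMeasure.
Variable mu : probability T R.
Hypothesis hX : mu X = 1%E.
Hypothesis hinv : forall E : set T, measurable E ->
  mu (@Defs.shift B b @^-1` E) = mu E.
Local Notation mr := (mfin mu).

Lemma mrX : mr X = 1.
Proof. by rewrite /mfin hX. Qed.

Lemma null_cyl (t : seq B) : (forall x, cyl 1 t x -> ~ X x) -> mr (cyl 1 t) = 0.
Proof.
move=> h.
have mc : measurable (cyl 1 t) by apply: cyl_measurable.
have e : mr (cyl 1 t `|` X) = mr (cyl 1 t) + mr X.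
  apply: mrU => //; first exact: X_measurable.
  by apply/seteqP; split => x // [h1 h2]; apply: (h x).
have := @mr_le1 _ _ _ mu _ (measurableU _ _ mc X_measurable).
have := @mr_ge0 _ _ _ mu _ mc.
rewrite e mrX; lra.
Qed.

Lemma sum_mr_cyl L : \sum_(t : L.-tuple B) mr (cyl 1 t) = 1.
Proof.
rewrite -(mrT mu) (@mr_part _ _ _ mu setT 1 L) //.
by apply: eq_bigr => t _; rewrite setTI.
Qed.

Variable n : nat.
Variables (w : seq B) (F : B -> R).
Hypothesis hD : forall a : A n, Dv w F (tau sigma a) = 0.
Variables (beta Bm : nat).
Hypothesis beta0 : (0 < beta)%N.
Hypothesis hbeta : forall a : A n, (beta <= size (tau sigma a))%N.
Hypothesis hBm : forall a : A n, (size (tau sigma a) <= Bm)%N.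
Hypothesis surj : forall j (a : A j), exists c : A j.+1, a \in sigma c.

Definition Ebound (L : nat) : R :=
  2 * ((1 + CF F) * Bm%:R) + (size w)%:R + (size w)%:R * L%:R / beta%:R.

Lemma Dv_bound L (t : L.-tuple B) :
  mr (cyl 1 t) * `|Dv w F t| <= mr (cyl 1 t) * Ebound L.
Proof.
have mc : measurable (cyl 1 t) by apply: cyl_measurable.
case: (pselect (exists x, cyl 1 t x /\ X x)) => [[x [hx hXx]]|hn]; last first.
  rewrite null_cyl ?mul0r // => x h1 h2; apply: hn; exists x; split.
    exact: h1.
  exact: h2.
apply: ler_wpM2l; first exact: mr_ge0.
have ht : factor_at x 1 L = t by move: hx; rewrite /cylw /= size_tuple.
have [n' [a ha]] := hXx 1 L.
rewrite ht in ha.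
have [u hu] := lift_level n surj a.
have hi : infix t (flatten (map (@tau _ sigma n) u)).
  by rewrite -sigma0n_flat; apply: infix_trans hu.
have [j [hj1 hj2]] := Dv_infix hD hbeta hBm hi.
apply: le_trans hj2 _.
rewrite /Ebound -addrA lerD2l.
have -> : (j.+1)%:R = j%:R + 1 :> R by rewrite natr1.
rewrite mulrDr mulr1 [X in X <= _]addrC lerD2l.
rewrite -mulrA; apply: ler_wpM2l; first exact: ler0n.
rewrite ler_pdivlMr ?ltr0n //.
by rewrite -natrM ler_nat -(size_tuple t).
Qed.

Lemma Dsum L : (0 < size w)%N -> (size w <= L)%N ->
  \sum_(t : L.-tuple B) mr (cyl 1 t) * Dv w F t =
  (L - size w).+1%:R * mr (cyl 1 w) - L%:R * \sum_(c : B) F c * mr (cyl 1 [:: c]).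
Proof.
move=> w0 wL.
rewrite /Dv.
under eq_bigr => t _ do rewrite mulrBr.
rewrite sumrB count_ident //; congr (_ - _).
rewrite mulr_sumr.
under eq_bigr => t _ do rewrite mulr_sumr.
rewrite exchange_big /=; apply: eq_bigr => c _.
have -> : \sum_(t : L.-tuple B) mr (cyl 1 t) * (F c * (count_mem c t)%:R) =
          F c * \sum_(t : L.-tuple B) mr (cyl 1 t) * (cnt [:: c] t)%:R.
  rewrite mulr_sumr; apply: eq_bigr => t _.
  by rewrite cnt_letter mulrCA.
have L0 : (0 < L)%N by apply: leq_trans w0 wL.
rewrite count_ident //.
by rewrite subn1 prednK // mulrCA.
Qed.

Lemma main_bound L : (0 < size w)%N -> (size w <= L)%N ->
  `|(L - size w).+1%:R * mr (cyl 1 w) - L%:R * \sum_(c : B) F c * mr (cyl 1 [:: c])|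
    <= Ebound L.
Proof.
move=> w0 wL; rewrite -Dsum //.
apply: le_trans (ler_norm_sum _ _ _) _.
apply: le_trans (_ : \sum_(t : L.-tuple B) mr (cyl 1 t) * Ebound L <= _).
  apply: ler_sum => t _; rewrite normrM ger0_norm ?Dv_bound //.
  by apply: mr_ge0; apply: cyl_measurable.
by rewrite -mulr_suml sum_mr_cyl mul1r.
Qed.

End PerMeasure.
End Main.

Lemma nth_factor (B : Type) (d : B) (x : int -> B) (j : int) L l : (l < L)%N ->
  nth d (factor_at x j L) l = x (j + l%:Z).
Proof.
by move=> h; rewrite /factor_at (nth_map 0%N) ?size_iota // nth_iota // add0n.
Qed.

Lemma restrict_window (B : Type) (x : int -> B) k1 k : (k1 <= k)%N ->
  take (2 * k1).+1 (drop (k - k1) (factor_at x (- k%:Z) (2 * k).+1)) =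
  factor_at x (- k1%:Z) (2 * k1).+1.
Proof.
move=> h; rewrite take_drop_factor.
have -> : (- k%:Z + (k - k1)%N%:Z) = - k1%:Z by lia.
by have -> : minn (2 * k1).+1 ((2 * k).+1 - (k - k1)) = (2 * k1).+1 by lia.
Qed.

Section Final.
Variables (R : realType) (A : nat -> finType).
Variable sigma : forall n, A n.+1 -> seq (A n).
Variable b : A 0%N.
Local Notation B := (A 0%N).
Local Notation T := (shift_space b).
Local Notation X := (gen_subshift sigma b : set T).
Local Notation wset := (@wwin B b).
Local Notation cyl := (@cylw B b).

Definition Gsys : set (set T) :=
  [set E | exists k (P : seq B -> Prop), E = wset (- k%:Z) (2 * k).+1 P].

Lemma Gsys_setI : setI_closed Gsys.
Proof.
move=> _ _ [k1 [P1 ->]] [k2 [P2 ->]].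
exists (maxn k1 k2), (fun v => P1 (take (2 * k1).+1 (drop (maxn k1 k2 - k1) v)) /\
                               P2 (take (2 * k2).+1 (drop (maxn k1 k2 - k2) v))).
apply/seteqP; split => x /=; rewrite /wwin /= ?restrict_window ?leq_maxl ?leq_maxr //.
Qed.

Lemma measurable_eq : measurable = <<s Gsys >>.
Proof.
apply/seteqP; split.
  apply: smallest_sub; first exact: smallest_sigma_algebra.
  move=> C [i [a ->]]; apply: sub_sigma_algebra.
  exists (absz i), (fun v => nth b v (absz (i + (absz i)%:Z)) = a).
  apply/seteqP; split => x /=; rewrite /wwin /= nth_factor; try lia;
  by have -> : (- (absz i)%:Z + (absz (i + (absz i)%:Z))%:Z) = i by lia.
apply: smallest_sub; first exact: sigma_algebra_measurable.
by move=> E [k [P ->]]; apply: wset_measurable.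
Qed.

End Final.

Unset Implicit Arguments.

Theorem corollary6p3 (R : realType) (A : nat -> finType)
  (sigma : forall n : nat, A n.+1 -> seq (A n)) (b : A 0%N) :
  non_erasing sigma ->
  everywhere_growing sigma ->
  finite_alphabet_rank A ->
  (forall n : nat, mx_invertible (incidence_matrix R sigma n)) ->
  forall mu mu' : probability (shift_space b) R,
    invariant_measure_on (gen_subshift sigma b) mu ->
    invariant_measure_on (gen_subshift sigma b) mu' ->
    (forall a : A 0%N, mu (letter_cyl b a) = mu' (letter_cyl b a)) ->
    forall E : set (shift_space b), measurable E -> mu E = mu' E.
Proof.
move=> _ hgrow _ hM mu mu' [hX hinv] [hX' hinv'] hlet.
have surj := surj_of_inv hM.
have letE : forall c : A 0%N, letter_cyl b c = @cylw _ b 1 [:: c].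
  move=> c; apply/seteqP; split => x; rewrite /letter_cyl /cylw /factor_at /= addr0.
    by move=> ->.
  by case.
have core : forall w : seq (A 0%N),
    mfin mu (@cylw _ b 1 w) = mfin mu' (@cylw _ b 1 w).
  move=> w; case: (posnP (size w)) => [/eqP|w0].
    rewrite size_eq0 => /eqP ->.
    have -> : @cylw _ b 1 [::] = setT by apply/seteqP; split => x.
    by rewrite !mrT.
  set m := mfin mu _; set m' := mfin mu' _.
  suff : `|m - m'| = 0 by move/normr0_eq0/eqP; rewrite subr_eq0 => /eqP.
  apply: (@real_zero R _ (2 * (size w)%:R) (size w)).
  - exact: normr_ge0.
  - by apply: mulr_ge0 => //; apply: ler0n.
  move=> N N0.
  have [n0 hn0] := hgrow N.
  have [F hF] := exists_F hM w n0.
  pose Bm := (\max_(a : A n0) size (tau sigma a))%N.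
  have hbeta : forall a : A n0, (N <= size (tau sigma a))%N.
    by move=> a; apply: hn0.
  have hBm : forall a : A n0, (size (tau sigma a) <= Bm)%N.
    by move=> a; apply: (@leq_bigmax _ (fun a => size (tau sigma a))).
  pose E0 : R := 2 * ((1 + CF F) * Bm%:R).
  exists (2 * E0 + 2 * (size w)%:R) => L wL.
  have h1 := main_bound hX hinv hF N0 hbeta hBm surj w0 wL.
  have h2 := main_bound hX' hinv' hF N0 hbeta hBm surj w0 wL.
  have eP : \sum_(c : A 0%N) F c * mfin mu (@cylw _ b 1 [:: c]) =
            \sum_(c : A 0%N) F c * mfin mu' (@cylw _ b 1 [:: c]).
    by apply: eq_bigr => c _; rewrite -letE /mfin hlet.
  rewrite -eP in h2.
  move: h1 h2; rewrite /Ebound -/m -/m'.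
  set P := L%:R * _; set c := (L - size w).+1%:R.
  move=> h1 h2.
  have hc : 0 <= c by apply: ler0n.
  have -> : `|m - m'| * c = `|(c * m - P) - (c * m' - P)|.
    by rewrite -(ger0_norm hc) -normrM mulrBl opprB addrA subrK (mulrC m) (mulrC m') (ger0_norm hc).
  have := ler_normB (c * m - P) (c * m' - P).
  have -> : 2 * (size w)%:R * L%:R / N%:R = 2 * ((size w)%:R * L%:R / N%:R) :> R.
    by rewrite -!mulrA.
  rewrite /E0; lra.
apply: (measure_unique (@Gsys A b) (fun _ => setT)).
- exact: measurable_eq.
- exact: Gsys_setI.
- by move=> _; exists 0%N, (fun _ => True); apply/seteqP; split => x.
- by apply/seteqP; split => x // _; exists 0%N.
- move=> _ [k [P ->]].
  have mW : measurable (@wwin _ b (- k%:Z) (2 * k).+1 P) by apply: wset_measurable.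
  set W := @wwin _ b (- k%:Z) (2 * k).+1 P in mW *.
  transitivity (mfin mu W)%:E; first exact: (@muE _ _ _ mu _ mW).
  transitivity (mfin mu' W)%:E; last exact: (esym (@muE _ _ _ mu' _ mW)).
  congr EFin; rewrite /W.
  rewrite (@mr_part _ _ _ mu _ (- k%:Z) (2 * k).+1 mW).
  rewrite (@mr_part _ _ _ mu' _ (- k%:Z) (2 * k).+1 mW).
  apply: eq_bigr => t _.
  case: (pselect (P t)) => Pt.
    have -> : @wwin _ b (- k%:Z) (2 * k).+1 P `&` @cylw _ b (- k%:Z) t =
              @cylw _ b (- k%:Z) t.
      apply/seteqP; split => x; first by case.
      move=> hx; split => //; move: hx; rewrite /cylw /wwin /= size_tuple => ->.
      exact: Pt.
    by rewrite (mr_cyl hinv) (mr_cyl hinv') core.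
  have -> : @wwin _ b (- k%:Z) (2 * k).+1 P `&` @cylw _ b (- k%:Z) t = set0.
    apply/seteqP; split => x // [h1]; rewrite /cylw /wwin /= size_tuple => h2.
    by apply: Pt; rewrite -h2.
  by rewrite !mr0.
- by move=> _; apply: (le_lt_trans (probability_le1 mu measurableT)); rewrite ltry.
Qed.
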